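(* Let $P$ be a poset and $\mathcal D$ a meet-specification of $P$ with radius $\omega$. Let $X$ be the set of all non-empty finitely generated $\mathcal D$-filters of $P$, ordered by reverse inclusion, and $e_X:P\to X$, $p\mapsto p^\uparrow$, the corresponding meet-extension. If $L$ is a lattice and $f:P\to L$ is a $\mathcal D$-morphism, then $f$ has enough meets for $e_X$, i.e. $\bigwedge f[e_X^{-1}(x^\uparrow)]$ exists in $L$ for every $x\in X$.
   Context: $p^\uparrow=\{q\ge p\}$; $e^{-1}(Z)=\{p:e(p)\in Z\}$. A meet-specification of $P$ is a set $\mathcal D$ of subsets of $P$ such that $\bigwedge S$ exists in $P$ for each $S\in\mathcal D$ and $\{p\}\in\mathcal D$ for all $p\in P$; radius $\omega$ means every member is finite. A $\mathcal D$-filter is an upset $F$ with $\bigwedge S\in F$ whenever $S\in\mathcal D$, $S\subseteq F$; it is finitely generated if it is the smallest $\mathcal D$-filter containing some finite set. An order-preserving map $f$ is a $\mathcal D$-morphism if $f(\bigwedge S)=\bigwedge f[S]$ for all $S\in\mathcal D$. *)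

(* Defs.v *)
From mathcomp Require Import all_boot all_order.
Set Implicit Arguments. Unset Strict Implicit. Unset Printing Implicit Defensive.
Import Order.TTheory.
Local Open Scope order_scope.

Definition is_glb {d} {T : porderType d} (A : T -> Prop) (m : T) : Prop :=
  (forall a, A a -> m <= a) /\ (forall l, (forall a, A a -> l <= a) -> l <= m).

Definition has_meet {d} {T : porderType d} (A : T -> Prop) : Prop :=
  exists m, is_glb A m.

Definition finite_set {T : eqType} (A : T -> Prop) : Prop :=
  exists s : seq T, forall x, A x <-> x \in s.

Definition fimage {A B : Type} (f : A -> B) (S : A -> Prop) : B -> Prop :=
  fun b => exists2 a, S a & f a = b.

Definition subset {T : Type} (A B : T -> Prop) : Prop := forall x, A x -> B x.

Definition meet_spec {d} {P : porderType d} (D : (P -> Prop) -> Prop) : Prop :=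
  (forall S, D S -> has_meet S) /\ (forall p, D (fun q => q = p)).

Definition radius_omega {d} {P : porderType d} (D : (P -> Prop) -> Prop) : Prop :=
  forall S, D S -> finite_set S.

Definition upset {d} {P : porderType d} (F : P -> Prop) : Prop :=
  forall p q, F p -> p <= q -> F q.

Definition D_filter {d} {P : porderType d} (D : (P -> Prop) -> Prop)
  (F : P -> Prop) : Prop :=
  upset F /\
  (forall S m, D S -> subset S F -> is_glb S m -> F m).

Definition D_filter_generated_by {d} {P : porderType d}
  (D : (P -> Prop) -> Prop) (A F : P -> Prop) : Prop :=
  D_filter D F /\ subset A F /\
  (forall G, D_filter D G -> subset A G -> subset F G).

Definition finitely_generated {d} {P : porderType d}
  (D : (P -> Prop) -> Prop) (F : P -> Prop) : Prop :=
  exists2 A, finite_set A & D_filter_generated_by D A F.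

Definition D_morphism {d dL} {P : porderType d} {L : porderType dL}
  (D : (P -> Prop) -> Prop) (f : P -> L) : Prop :=
  (forall p q, p <= q -> f p <= f q) /\
  (forall S m, D S -> is_glb S m -> is_glb (fimage f S) (f m)).

Definition in_X {d} {P : porderType d} (D : (P -> Prop) -> Prop)
  (x : P -> Prop) : Prop :=
  (exists p, x p) /\ finitely_generated D x.

(* e_X p = p^up *)
Definition up {d} {P : porderType d} (p : P) : P -> Prop := fun q => p <= q.

Definition le_X {T : Type} (x y : T -> Prop) : Prop := subset y x.

(* e_X^{-1}(x^up) = { p | x <=_X e_X p } *)
Definition eX_preimage_up {d} {P : porderType d} (x : P -> Prop) : P -> Prop :=
  fun p => le_X x (up p).

(* Main.v *)
Require Import Defs.
From mathcomp Require Import all_boot all_order.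
Import Order.TTheory.
Local Open Scope order_scope.

Lemma foldr_meet_le (dL : Order.disp_t) (L : latticeType dL) (T : eqType) (f : T -> L)
  (p0 : T) (s : seq T) (l : L) :
  (l <= foldr (fun a acc => f a `&` acc) (f p0) s) <->
  (l <= f p0 /\ forall a, a \in s -> l <= f a).
Proof.
elim: s => [|b s IH] /=.
  by split; [move=> H; split=> // a; rewrite in_nil| case].
rewrite lexI; split.
  move=> /andP [H1 H2]; have [H3 H4] := (proj1 IH H2); split=> // a.
  by rewrite in_cons => /orP [/eqP ->|Ha] //; exact: H4.
move=> [H1 H2]; apply/andP; split; first by apply: H2; rewrite in_cons eqxx.
by apply IH; split=> // a Ha; apply: H2; rewrite in_cons Ha orbT.
Qed.

Theorem lemma9p4 (dP : Order.disp_t) (P : porderType dP)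
  (D : (P -> Prop) -> Prop)
  (dL : Order.disp_t) (L : latticeType dL) (f : P -> L) :
  meet_spec D -> radius_omega D -> D_morphism D f ->
  forall x : P -> Prop, in_X D x ->
    has_meet (fimage f (eX_preimage_up x)).
Proof.
move=> _ _ [fmono fmeet] x [[p0 xp0] [A [s As] [[xup xmeet] [Ax xmin]]]].
set m := foldr (fun a acc => f a `&` acc) (f p0) s.
have key := @foldr_meet_le dL L P f p0 s.
have mA : forall a, a \in s -> m <= f a by case: (proj1 (key m) (lexx m)).
have m0 : m <= f p0 by case: (proj1 (key m) (lexx m)).
exists m; split.
- move=> b [a Ha <-].
  have xa : x a := Ha a (lexx a).
  have sub : Defs.subset x (fun p => m <= f p).
    apply: xmin; last first.
      by move=> a' Aa'; apply: mA; apply/As.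
    split.
      by move=> p q Gp pq; exact: (le_trans Gp (fmono _ _ pq)).
    move=> S m' DS SG glb.
    have [_ gr] := fmeet S m' DS glb.
    by apply: gr => b' [a' Sa' <-]; exact: (SG a' Sa').
  exact: sub.
- move=> l H; apply/key; split.
    by apply: H; exists p0 => // q pq; exact: (xup _ _ xp0 pq).
  move=> a Ha; apply: H; exists a => // q aq; apply: (xup a) => //.
  by apply Ax; apply/As.
Qed.
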